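(* Let $F\in\mathcal{F}^n$ with radial function $\rho$. For $x\in\mathbf{S}^n$, let $M(x)$ be an outward normal vector to a hyperplane supporting $F$ at $r(x)=\rho(x)x$, rescaled so that $\langle M(x),x\rangle=\rho(x)$. Then $v=-M(x)+\rho(x)x\in\partial\rho(x)$. Conversely, for each $v\in\partial\rho(x)$ there exists a unique hyperplane supporting $F$ at $r(x)$ with outward normal $M(x)$ such that $v=-M(x)+\rho(x)x$.
   Context: $\mathbf{S}^n$ is the unit sphere in $\mathbb{R}^{n+1}$, $n\ge1$, centered at the origin $\mathcal{O}$. $\mathcal{F}^n$ is the set of boundaries of compact convex sets in $\mathbb{R}^{n+1}$ containing $\mathcal{O}$ in their interior; for $F\in\mathcal{F}^n$ its radial function $\rho(x)$ is the distance from $\mathcal{O}$ to the point where the ray in direction $x\in\mathbf{S}^n$ meets $F$. For $f\in C(\mathbf{S}^n)$ and $x_0\in\mathbf{S}^n$, with tangent space $T\mathbf{S}^n_{x_0}=\{v\in\mathbb{R}^{n+1}:\langle v,x_0\rangle=0\}$, the subdifferential of $f$ at $x_0$ is $\partial f(x_0)=\{v\in T\mathbf{S}^n_{x_0}: f(x)\langle -v+f(x_0)x_0,x\rangle\le f^2(x_0)\ \forall x\in\mathbf{S}^n\}$. *)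

(* Defs.v *)
From mathcomp Require Import all_boot all_order all_algebra all_classical all_reals all_analysis.
Import numFieldNormedType.Exports.
Set Implicit Arguments. Unset Strict Implicit. Unset Printing Implicit Defensive.
Import Order.TTheory GRing.Theory Num.Theory.
Local Open Scope classical_set_scope.
Local Open Scope ring_scope.

Definition dotv (R : realType) (n : nat) (u v : 'rV[R]_n.+1) : R := (u *m v^T) 0 0.

Definition sphere (R : realType) (n : nat) : set 'rV[R]_n.+1 :=
  [set x | dotv x x = 1].

Definition convex_setv (R : realType) (n : nat) (K : set 'rV[R]_n.+1) : Prop :=
  forall x y (t : R), K x -> K y -> 0 <= t -> t <= 1 -> K (t *: x + (1 - t) *: y).

Definition convex_body0 (R : realType) (n : nat) (K : set 'rV[R]_n.+1) : Prop :=
  [/\ compact K, convex_setv K & interior K 0].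

(* Topological boundary of K; F = boundary K is an element of \mathcal{F}^n. *)
Definition boundary (R : realType) (n : nat) (K : set 'rV[R]_n.+1) : set 'rV[R]_n.+1 :=
  closure K `\` interior K.

(* rho is the radial function of F: for x in S^n, rho x is the distance from the
   origin to the point where the ray in direction x meets F, i.e. rho x >= 0 and
   rho x *: x lies on F (this point is unique for F in \mathcal{F}^n). *)
Definition radial_function (R : realType) (n : nat) (F : set 'rV[R]_n.+1)
  (rho : 'rV[R]_n.+1 -> R) : Prop :=
  forall x, sphere x -> 0 <= rho x /\ F (rho x *: x).

Definition subdiff (R : realType) (n : nat) (f : 'rV[R]_n.+1 -> R) (x0 : 'rV[R]_n.+1)
  : set 'rV[R]_n.+1 :=
  [set v | dotv v x0 = 0 /\
     forall x, sphere x -> f x * dotv (- v + f x0 *: x0) x <= f x0 ^+ 2].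

(* N is an outward normal vector of a hyperplane supporting the convex body K
   (with boundary F) at the point p: the hyperplane {y | <N,y> = <N,p>} passes
   through p and K lies on the side {y | <N,y> <= <N,p>}. *)
Definition outward_support_normal (R : realType) (n : nat) (K : set 'rV[R]_n.+1)
  (p N : 'rV[R]_n.+1) : Prop :=
  N != 0 /\ forall y, K y -> dotv N y <= dotv N p.

(* Main.v *)
Require Import Defs.
From mathcomp Require Import all_boot all_order all_algebra all_classical all_reals all_analysis.
Import numFieldNormedType.Exports.
Import Order.TTheory GRing.Theory Num.Theory.
Local Open Scope classical_set_scope.
Local Open Scope ring_scope.

Section S.
Variables (R : realType) (n : nat).
Implicit Types (u v w : 'rV[R]_n.+1).

Lemma dotvE u v : dotv u v = \sum_i u 0 i * v 0 i.
Proof. by rewrite /dotv !mxE; apply: eq_bigr => i _; rewrite mxE. Qed.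

Lemma dotvDl u v w : dotv (u + v) w = dotv u w + dotv v w.
Proof. by rewrite !dotvE -big_split; apply: eq_bigr => i _; rewrite mxE mulrDl. Qed.
Lemma dotvNl u w : dotv (- u) w = - dotv u w.
Proof. by rewrite !dotvE -sumrN; apply: eq_bigr => i _; rewrite mxE mulNr. Qed.
Lemma dotvZl a u w : dotv (a *: u) w = a * dotv u w.
Proof. by rewrite !dotvE mulr_sumr; apply: eq_bigr => i _; rewrite mxE mulrA. Qed.
Lemma dotvC u w : dotv u w = dotv w u.
Proof. by rewrite !dotvE; apply: eq_bigr => i _; rewrite mulrC. Qed.
Lemma dotvZr a u w : dotv u (a *: w) = a * dotv u w.
Proof. by rewrite dotvC dotvZl dotvC. Qed.
Lemma dotv0r u : dotv u 0 = 0.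
Proof. by rewrite -(scale0r 0) dotvZr mul0r. Qed.
Lemma dotv_ge0 u : 0 <= dotv u u.
Proof. by rewrite dotvE; apply: sumr_ge0 => i _; rewrite -expr2 sqr_ge0. Qed.
Lemma dotv_eq0 u : dotv u u = 0 -> u = 0.
Proof.
rewrite dotvE => H; apply/rowP => i; rewrite mxE.
have := psumr_eq0P (P := predT) (F := fun i => u 0 i * u 0 i) _ H (i := i).
by move=> /(_ (fun j _ => ltac:(rewrite -expr2; exact: sqr_ge0)) isT) /eqP; rewrite mulf_eq0 orbb => /eqP.
Qed.

Lemma interior_seg (K : set 'rV[R]_n.+1) y t :
  convex_setv K -> interior K 0 -> K y -> 0 <= t -> t < 1 -> interior K (t *: y).
Proof.
move=> cK /nbhs_ballP [e e0 he] Ky t0 t1.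
apply/nbhs_ballP; exists ((1 - t) * e); first by rewrite /= mulr_gt0 // subr_gt0.
move=> w; rewrite -ball_normE /= => hw.
have t1' : 0 < 1 - t by rewrite subr_gt0.
set u := (1 - t)^-1 *: (w - t *: y).
have Ku : K u.
  apply: he; rewrite -ball_normE /= sub0r normrN /u normrZ ger0_norm ?invr_ge0 ?ltW //.
  by rewrite ltr_pdivrMl // -normrN opprB.
have -> : w = t *: y + (1 - t) *: u.
  by rewrite /u scalerA mulfV ?gt_eqF // scale1r addrC subrK.
apply: cK => //; by rewrite ltW.
Qed.
Lemma normalize_sphere (y : 'rV[R]_n.+1) : y != 0 ->
  0 < Num.sqrt (dotv y y) /\ sphere ((Num.sqrt (dotv y y))^-1 *: y).
Proof.
move=> y0.
have spos : 0 < Num.sqrt (dotv y y).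
  rewrite sqrtr_gt0 lt0r dotv_ge0 andbT; apply/eqP => /dotv_eq0 y0'.
  by move/eqP: y0.
split => //.
have ss : Num.sqrt (dotv y y) ^+ 2 = dotv y y by rewrite sqr_sqrtr ?dotv_ge0.
rewrite /sphere /= dotvZl dotvZr mulrA -expr2 -{2}ss -exprMn mulVf ?expr1n //.
by rewrite gt_eqF.
Qed.
End S.

Theorem proposition9 (R : realType) (n : nat) (hn : (1 <= n)%N)
  (K : set 'rV[R]_n.+1) (hK : convex_body0 K)
  (rho : 'rV[R]_n.+1 -> R) (hrho : radial_function (boundary K) rho)
  (x : 'rV[R]_n.+1) (hx : sphere x) :
  (forall M : 'rV[R]_n.+1,
     outward_support_normal K (rho x *: x) M -> dotv M x = rho x ->
     subdiff rho x (- M + rho x *: x))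
  /\
  (forall v : 'rV[R]_n.+1, subdiff rho x v ->
     exists! M : 'rV[R]_n.+1,
       [/\ outward_support_normal K (rho x *: x) M, dotv M x = rho x
         & v = - M + rho x *: x]).
Proof.
case: hK => cpK cvK i0.
have clK : closure K = K.
  by apply/esym/closure_id; apply: compact_closed => //; exact: norm_hausdorff.
have bdK : forall z, boundary K z -> K z /\ ~ interior K z.
  by move=> z [cz niz]; split => //; rewrite -clK.
have hxx : dotv x x = 1 := hx.
have [rx0 /bdK [Krx nirx]] := hrho x hx.
have rpos : 0 < rho x.
  rewrite lt0r rx0 andbT; apply/eqP => r0; apply: nirx; by rewrite r0 scale0r.
split.
  move=> M [M0 hM] hMx; split.
    by rewrite dotvDl dotvNl hMx dotvZl hxx mulr1 addNr.
  move=> y hy; rewrite opprD opprK subrK.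
  have [_ /bdK [Ky _]] := hrho y hy.
  rewrite -dotvZr (le_trans (hM _ Ky)) // dotvZr hMx expr2 //.
move=> v [hv0 hv]; exists (- v + rho x *: x); split; last first.
  by move=> M' [_ _ ->]; rewrite opprD opprK subrK.
have hNx : dotv (- v + rho x *: x) x = rho x.
  by rewrite dotvDl dotvNl hv0 dotvZl hxx mulr1 oppr0 add0r.
split; [|exact: hNx|by rewrite opprD opprK subrK].
split.
  apply/eqP => N0; move: hNx; rewrite N0 dotvC dotv0r => r0.
  by move: rpos; rewrite -r0 ltxx.
set N := - v + rho x *: x.
have hN2 : dotv N (rho x *: x) = rho x ^+ 2 by rewrite dotvZr hNx expr2.
move=> y Ky; rewrite hN2.
have [->|y0] := eqVneq y 0; first by rewrite dotv0r sqr_ge0.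
have [spos hz] := @normalize_sphere _ _ _ y0.
set s := Num.sqrt (dotv y y) in spos hz.
set z := s^-1 *: y in hz.
have yz : y = s *: z by rewrite /z scalerA mulfV ?gt_eqF // scale1r.
have [rz0 /bdK [_ nirz]] := hrho z hz.
have srz : s <= rho z.
  rewrite leNgt; apply/negP => lt; apply: nirz.
  have -> : rho z *: z = (rho z / s) *: y.
    by rewrite /z scalerA.
  have t0 : 0 <= rho z / s by rewrite divr_ge0 // ltW.
  have t1 : rho z / s < 1 by rewrite ltr_pdivrMr // mul1r.
  exact: (interior_seg _ _ _ _ _ cvK i0 Ky t0 t1).
have := hv z hz; rewrite -/N => hz2.
rewrite yz dotvZr.
have [d0|d0] := leP (dotv N z) 0.
  by apply: le_trans (sqr_ge0 _); rewrite mulr_ge0_le0 // ltW.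
apply: le_trans hz2; rewrite ler_pM2r //.
Qed.
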